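(* Let $n\ge1$, $R>0$, $\gamma\in(0,1)$, $\beta=\frac{2}{2-\gamma}$, and let $U\in C^2((R,\infty))$, positive on $(R,\infty)$, with $U,U'$ extending continuously to $r=R$, solve $$U''+\Big(\frac{n-1}{r}+\frac r2\Big)U'-\frac\beta2U=\gamma U^{\gamma-1}\ \text{ in }(R,\infty),\qquad U(R)=U'(R)=0.$$ Then $U>0$ and $U'>0$ in $(R,\infty)$, $(U^{1/\beta})'(R)=\frac{\sqrt2}{\beta}$ (as a right derivative, i.e. $\lim_{r\downarrow R}U^{1/\beta}(r)/(r-R)=\sqrt2/\beta$), and $\lim_{r\to\infty}U(r)/r^\beta=c$ for some $c>0$. *)

(* Defs.v *)
From Stdlib Require Import Reals.
From Coquelicot Require Import Coquelicot.
Open Scope R_scope.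

Definition beta_of (g : R) : R := 2 / (2 - g).

(* Main.v *)
Require Import Defs.
From Stdlib Require Import Reals Lra Psatz Classical.
From Coquelicot Require Import Coquelicot.
Open Scope R_scope.


Lemma deriv_cont_pt (f : R -> R) x l : is_derive f x l -> continuity_pt f x.
Proof.
  intro H. apply continuity_pt_filterlim. apply (ex_derive_continuous f x).
  exists l; exact H.
Qed.

Lemma mono_le (f df : R -> R) a b : a <= b ->
  (forall x, a <= x <= b -> is_derive f x (df x)) ->
  (forall x, a <= x <= b -> 0 <= df x) -> f a <= f b.
Proof.
  intros Hab Hd Hp.
  destruct (MVT_gen f a b df) as [c [Hc E]].
  - intros x Hx. apply Hd. rewrite Rmin_left in Hx by lra. rewrite Rmax_right in Hx by lra. lra.
  - intros x Hx. apply (deriv_cont_pt _ _ (df x)). apply Hd.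
    rewrite Rmin_left in Hx by lra. rewrite Rmax_right in Hx by lra. lra.
  - rewrite Rmin_left in Hc by lra. rewrite Rmax_right in Hc by lra.
    assert (0 <= df c) by (apply Hp; lra). nra.
Qed.

Lemma barrier (f df : R -> R) a t L : a <= t ->
  (forall x, a <= x <= t -> is_derive f x (df x)) ->
  (forall x, a <= x <= t -> f x <= L -> 0 < df x) -> L < f a -> L < f t.
Proof.
  intros Hat Hd Hp HL.
  destruct (Rlt_or_le L (f t)) as [H|H]; [exact H|exfalso].
  destruct (continuity_ab_min f a t Hat) as [m [Hm Hmr]].
  { intros c Hc. apply (deriv_cont_pt _ _ (df c)). apply Hd; lra. }
  assert (Hfm : f m <= L) by (specialize (Hm t ltac:(lra)); lra).
  assert (Ham : a < m).
  { destruct (Req_dec a m) as [E|E]; [subst; lra| lra]. }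
  assert (Hdm : 0 < df m) by (apply Hp; lra).
  pose proof (proj1 (is_derive_Reals f m (df m)) (Hd m Hmr)) as D.
  destruct (D (df m) Hdm) as [del Hdel].
  set (h := - Rmin (del/2) (m - a)).
  assert (Hh1 : h < 0).
  { unfold h. apply Ropp_lt_gt_0_contravar. apply Rmin_pos. destruct del; simpl; lra. lra. }
  assert (Hh2 : - h <= m - a) by (unfold h; rewrite Ropp_involutive; apply Rmin_r).
  assert (Hh3 : - h <= del/2) by (unfold h; rewrite Ropp_involutive; apply Rmin_l).
  assert (Hdp : 0 < del) by (destruct del; simpl; lra).
  specialize (Hdel h ltac:(lra) ltac:(rewrite Rabs_left; lra)).
  set (q := (f (m + h) - f m) / h) in Hdel.
  assert (Hq : 0 < q).
  { destruct (Rabs_def2 _ _ Hdel). lra. }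
  assert (E : f (m + h) - f m = q * h) by (unfold q; field; lra).
  specialize (Hm (m + h) ltac:(lra)). nra.
Qed.

Lemma isd_lin (f h : R -> R) x df dh a b l : is_derive f x df -> is_derive h x dh ->
  l = a * df + b * dh -> is_derive (fun z => a * f z + b * h z) x l.
Proof.
  intros Hf Hh El. subst l.
  exact (is_derive_plus _ _ x _ _ (is_derive_scal f x a df Hf) (is_derive_scal h x b dh Hh)).
Qed.


Lemma mono_lim (F : R -> R) r1 lb : (forall x y, r1 <= x <= y -> F y <= F x) ->
  (forall x, r1 <= x -> lb <= F x) ->
  exists c, lb <= c /\ forall eps, 0 < eps -> exists M, forall x, M < x -> Rabs (F x - c) < eps.
Proof.
  intros Hmono Hlb.
  set (E := fun y => exists x, r1 <= x /\ y = - F x).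
  assert (Hb : bound E).
  { exists (- lb). intros y [x [Hx ->]]. specialize (Hlb x Hx). lra. }
  assert (Hne : exists y, E y) by (exists (- F r1); exists r1; split; [lra|reflexivity]).
  destruct (completeness E Hb Hne) as [m [Hub Hleast]].
  exists (- m). split.
  - assert (m <= - lb).
    { apply Hleast. intros y [x [Hx ->]]. specialize (Hlb x Hx). lra. }
    lra.
  - intros eps Heps.
    destruct (classic (exists x0, r1 <= x0 /\ m - eps < - F x0)) as [[x0 [Hx0 Hlt]]|Hno].
    + exists x0. intros x Hx.
      assert (F x <= F x0) by (apply Hmono; lra).
      assert (- F x <= m) by (apply Hub; exists x; split; [lra|reflexivity]).
      apply Rabs_def1; lra.
    + exfalso. assert (m <= m - eps); [|lra].
      apply Hleast. intros y [x [Hx ->]].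
      destruct (Rle_or_lt (- F x) (m - eps)) as [h|h]; [exact h|].
      exfalso. apply Hno. exists x. split; assumption.
Qed.


Lemma ball_R c (e : posreal) y : ball c e y <-> Rabs (y - c) < e.
Proof. unfold ball; simpl; unfold AbsRing_ball, abs, minus, plus, opp; simpl. tauto. Qed.

Lemma lim_right_ex f a l : filterlim f (at_right a) (locally l) ->
  forall eps, 0 < eps -> exists d, 0 < d /\ forall y, a < y < a + d -> Rabs (f y - l) < eps.
Proof.
  intros H eps He. apply filterlim_locally with (eps := mkposreal eps He) in H.
  destruct H as [d Hd]. exists d. split; [destruct d; simpl; lra|].
  intros y Hy. apply (ball_R l (mkposreal eps He) (f y)). apply Hd; [|lra].
  apply ball_R. rewrite Rabs_right; lra.
Qed.

Lemma lim_right_intro f a l :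
  (forall eps, 0 < eps -> exists d, 0 < d /\ forall y, a < y < a + d -> Rabs (f y - l) < eps) ->
  filterlim f (at_right a) (locally l).
Proof.
  intros H. apply filterlim_locally. intros eps.
  destruct (H eps (cond_pos eps)) as [d [Hd Hy]].
  exists (mkposreal d Hd). intros y By Hay. apply ball_R. apply Hy.
  pose proof (proj1 (ball_R _ _ _) By) as B. simpl in B. destruct (Rabs_def2 _ _ B). lra.
Qed.

Lemma lim_infty_intro f l :
  (forall eps, 0 < eps -> exists M, forall y, M < y -> Rabs (f y - l) < eps) ->
  filterlim f (Rbar_locally p_infty) (locally l).
Proof.
  intros H. apply filterlim_locally. intros eps.
  destruct (H eps (cond_pos eps)) as [M HM]. exists M. intros y Hy. apply ball_R. auto.
Qed.

Lemma exp_le x y : x <= y -> exp x <= exp y.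
Proof. intros [H|H]; [left; apply exp_increasing; auto| subst; lra]. Qed.

Lemma ln_le x y : 0 < x -> x <= y -> ln x <= ln y.
Proof. intros H0 [H|H]; [left; apply ln_increasing; auto| subst; lra]. Qed.

Lemma rp_pos x y : 0 < Rpower x y.
Proof. unfold Rpower. apply exp_pos. Qed.

Lemma rp_small y : 0 < y -> forall p, 0 < p -> exists e, 0 < e /\ forall x, 0 < x < e -> Rpower x y < p.
Proof.
  intros Hy p Hp. exists (Rpower p (/y)). split; [apply rp_pos|].
  intros x Hx. replace p with (Rpower (Rpower p (/y)) y).
  - apply Rlt_Rpower_l; lra.
  - rewrite Rpower_mult. rewrite Rinv_l by lra. apply Rpower_1; lra.
Qed.

Lemma beta_gt1 g : 0 < g < 1 -> 1 < beta_of g.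
Proof. intros. unfold beta_of. apply (Rmult_lt_reg_r (2 - g)); [lra|]. field_simplify; lra. Qed.

Lemma beta_inv g : 0 < g < 1 -> 1 / beta_of g = 1 - g/2.
Proof. intros. unfold beta_of. field. lra. Qed.

Lemma INR_ge1 n : (1 <= n)%nat -> 1 <= INR n.
Proof. intros. apply (le_INR 1 n) in H. simpl in H. lra. Qed.

Definition ode_hyp (n:nat) (Rad g : R) (U : R->R) : Prop :=
  (1 <= n)%nat /\ 0 < Rad /\ 0 < g /\ g < 1 /\
  (forall r, Rad < r -> ex_derive U r /\ ex_derive (Derive U) r) /\
  (forall r, Rad < r -> 0 < U r) /\
  filterlim U (at_right Rad) (locally 0) /\
  filterlim (Derive U) (at_right Rad) (locally 0) /\
  (forall r, Rad < r -> Derive (Derive U) r =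
     beta_of g / 2 * U r + g * Rpower (U r) (g-1) - ((INR n - 1)/r + r/2) * Derive U r).

Definition Abnd (n : nat) Rad := (INR n - 1)/Rad + (Rad+1)/2.

Lemma near_R n Rad g U : ode_hyp n Rad g U ->
  exists d, 0 < d /\ d <= 1 /\ forall r, Rad < r < Rad + d ->
    U r < 1 /\ g/2 <= Derive (Derive U) r.
Proof.
  intros (Hn & HR & Hg0 & Hg1 & Hd & Hpos & HU0 & HdU0 & Hode).
  pose proof (INR_ge1 n Hn) as Hn1.
  set (A := Abnd n Rad).
  assert (HA : 0 < A).
  { unfold A, Abnd. assert (0 <= (INR n - 1)/Rad) by (apply Rdiv_le_0_compat; lra). lra. }
  destruct (lim_right_ex _ _ _ HU0 1 ltac:(lra)) as [d1 [Hd1 H1]].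
  destruct (lim_right_ex _ _ _ HdU0 (g/(2*A)) ltac:(apply Rdiv_lt_0_compat; lra)) as [d2 [Hd2 H2]].
  exists (Rmin 1 (Rmin d1 d2)).
  assert (Hm1 := Rmin_l 1 (Rmin d1 d2)). assert (Hm2 := Rmin_r 1 (Rmin d1 d2)).
  assert (Hm3 := Rmin_l d1 d2). assert (Hm4 := Rmin_r d1 d2).
  split; [apply Rmin_pos; [lra|apply Rmin_pos; lra]|]. split; [lra|].
  intros r Hr.
  specialize (H1 r ltac:(lra)). specialize (H2 r ltac:(lra)).
  specialize (Hpos r ltac:(lra)).
  rewrite Rminus_0_r, Rabs_right in H1 by lra.
  rewrite Rminus_0_r in H2.
  split; [lra|].
  rewrite Hode by lra.
  assert (Hrp : 1 <= Rpower (U r) (g-1)).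
  { unfold Rpower.
    assert (ln (U r) < 0). { rewrite <- ln_1. apply ln_increasing; lra. }
    assert (Hq : 0 <= (g-1) * ln (U r)) by nra.
    pose proof (exp_le _ _ Hq). rewrite exp_0 in H0. exact H0. }
  assert (Ha0 : 0 <= (INR n - 1)/r) by (apply Rdiv_le_0_compat; lra).
  assert (Ha1 : (INR n - 1)/r <= (INR n - 1)/Rad).
  { unfold Rdiv. apply Rmult_le_compat_l; [lra|]. apply Rinv_le_contravar; lra. }
  assert (Har : 0 <= (INR n - 1)/r + r/2 <= A) by (unfold A, Abnd; lra).
  assert (Hprod : Rabs (((INR n - 1)/r + r/2) * Derive U r) <= A * (g/(2*A))).
  { rewrite Rabs_mult. rewrite (Rabs_right ((INR n - 1)/r + r/2)) by lra.
    apply Rmult_le_compat; try lra; apply Rabs_pos. }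
  replace (A * (g/(2*A))) with (g/2) in Hprod by (field; lra).
  pose proof (Rle_abs (((INR n - 1)/r + r/2) * Derive U r)).
  assert (0 <= beta_of g / 2 * U r).
  { pose proof (beta_gt1 g ltac:(lra)). nra. }
  nra.
Qed.


Lemma dU_deriv n Rad g U : ode_hyp n Rad g U -> forall z, Rad < z ->
  is_derive (Derive U) z (Derive (Derive U) z).
Proof.
  intros (Hn & HR & Hg0 & Hg1 & Hd & _) z Hz. apply Derive_correct. apply Hd; lra.
Qed.

Lemma U_deriv n Rad g U : ode_hyp n Rad g U -> forall z, Rad < z ->
  is_derive U z (Derive U z).
Proof.
  intros (Hn & HR & Hg0 & Hg1 & Hd & _) z Hz. apply Derive_correct. apply Hd; lra.
Qed.

Lemma dpos n Rad g U : ode_hyp n Rad g U -> forall r, Rad < r -> 0 < Derive U r.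
Proof.
  intros H. pose proof H as H'.
  destruct H as (Hn & HR & Hg0 & Hg1 & Hd & Hpos & HU0 & HdU0 & Hode).
  destruct (near_R _ _ _ _ H') as [d [Hd0 [Hd1 Hnear]]].
  assert (Hsmall : forall x, Rad < x < Rad + d -> 0 < Derive U x).
  { intros x Hx.
    destruct (lim_right_ex _ _ _ HdU0 (g/4 * (x - Rad)) ltac:(nra)) as [eta [He Hy]].
    set (y := Rad + Rmin eta (x - Rad) / 2).
    assert (Hm1 := Rmin_l eta (x - Rad)). assert (Hm2 := Rmin_r eta (x - Rad)).
    assert (Hm0 : 0 < Rmin eta (x - Rad)) by (apply Rmin_pos; lra).
    specialize (Hy y ltac:(unfold y; lra)). rewrite Rminus_0_r in Hy.
    pose proof (Rle_abs (- Derive U y)) as Ha. rewrite Rabs_Ropp in Ha.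
    assert (HM := mono_le (fun z => Derive U z - g/2 * z) (fun z => Derive (Derive U) z - g/2) y x
      ltac:(unfold y; lra)).
    simpl in HM.
    assert (Hfin : Derive U y - g/2*y <= Derive U x - g/2*x).
    { apply HM.
      - intros z Hz. auto_derive.
        + apply (proj2 (Hd z ltac:(unfold y in Hz; lra))).
        + change (fun x => Derive U x) with (Derive U). ring.
      - intros z Hz. specialize (Hnear z ltac:(unfold y in Hz; lra)). lra. }
    assert (g/2*(x-y) >= g/4*(x-Rad)) by (unfold y; nra). lra. }
  intros r Hr.
  set (a := Rad + Rmin d (r - Rad) / 2).
  assert (Hm1 := Rmin_l d (r - Rad)). assert (Hm2 := Rmin_r d (r - Rad)).
  assert (Hm0 : 0 < Rmin d (r - Rad)) by (apply Rmin_pos; lra).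
  apply (barrier (Derive U) (Derive (Derive U)) a r 0).
  - unfold a; lra.
  - intros x Hx. apply (dU_deriv _ _ _ _ H'). unfold a in Hx; lra.
  - intros x Hx Hle. assert (Hx' : Rad < x) by (unfold a in Hx; lra).
    rewrite Hode by lra.
    pose proof (Hpos x Hx'). pose proof (rp_pos (U x) (g-1)).
    pose proof (beta_gt1 g ltac:(lra)). pose proof (INR_ge1 n Hn).
    assert (0 <= (INR n - 1)/x) by (apply Rdiv_le_0_compat; lra).
    assert (0 <= ((INR n - 1)/x + x/2)) by lra.
    assert (((INR n - 1)/x + x/2) * Derive U x <= 0) by nra.
    nra.
  - apply Hsmall. unfold a; lra.
Qed.


Lemma small_near n Rad g U : ode_hyp n Rad g U -> forall p, 0 < p ->
  exists eta, 0 < eta /\ forall s, Rad < s < Rad + eta -> 0 < U s < p /\ Rabs (Derive U s) < p.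
Proof.
  intros (Hn & HR & Hg0 & Hg1 & Hd & Hpos & HU0 & HdU0 & Hode) p Hp.
  destruct (lim_right_ex _ _ _ HU0 p Hp) as [d1 [Hd1 H1]].
  destruct (lim_right_ex _ _ _ HdU0 p Hp) as [d2 [Hd2 H2]].
  exists (Rmin d1 d2). split; [apply Rmin_pos; lra|].
  assert (Hm3 := Rmin_l d1 d2). assert (Hm4 := Rmin_r d1 d2).
  intros s Hs. specialize (H1 s ltac:(lra)). specialize (H2 s ltac:(lra)).
  specialize (Hpos s ltac:(lra)).
  rewrite Rminus_0_r in H1, H2. rewrite Rabs_right in H1 by lra. lra.
Qed.

Lemma U_mono n Rad g U : ode_hyp n Rad g U -> forall s r, Rad < s <= r -> U s <= U r.
Proof.
  intros H s r Hsr. apply (mono_le U (Derive U) s r ltac:(lra)).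
  - intros x Hx. apply (U_deriv _ _ _ _ H). lra.
  - intros x Hx. left. apply (dpos _ _ _ _ H). lra.
Qed.

Lemma rp_gm1 u g : 0 < u -> Rpower u (g-1) * u = Rpower u g.
Proof.
  intros Hu. unfold Rpower.
  replace ((g-1) * ln u) with (g * ln u + - ln u) by ring.
  rewrite exp_plus, exp_Ropp, exp_ln by lra. field. lra.
Qed.

Lemma rp_ge_self u g : 0 < u < 1 -> g < 1 -> u <= Rpower u g.
Proof.
  intros Hu Hg. unfold Rpower.
  assert (ln u < 0) by (rewrite <- ln_1; apply ln_increasing; lra).
  rewrite <- (exp_ln u) at 1 by lra. apply exp_le. nra.
Qed.

Definition Efun (g : R) (U : R -> R) s := Derive U s ^ 2 / 2 - Rpower (U s) g.

Lemma E_deriv n Rad g U : ode_hyp n Rad g U -> forall s, Rad < s ->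
  is_derive (Efun g U) s (Derive U s * (beta_of g / 2 * U s - ((INR n - 1)/s + s/2) * Derive U s)).
Proof.
  intros H s Hs. pose proof H as (Hn & HR & Hg0 & Hg1 & Hd & Hpos & HU0 & HdU0 & Hode).
  specialize (Hpos s Hs). destruct (Hd s Hs) as [Hd1 Hd2].
  unfold Efun, Rpower. auto_derive.
  - repeat split; auto.
  - change (fun x => Derive U x) with (Derive U). change (fun x => U x) with U.
    assert (E1 := rp_gm1 (U s) g Hpos). unfold Rpower in E1.
    rewrite <- E1. rewrite (Hode s Hs). unfold Rpower. field. lra.
Qed.


Lemma E_bound n Rad g U : ode_hyp n Rad g U ->
  exists d, 0 < d /\ d <= 1 /\ forall r, Rad < r < Rad + d ->
    U r < 1 /\ Rabs (Efun g U r) <= (beta_of g / 2 * U r + Abnd n Rad * Derive U r) * U r.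
Proof.
  intros H. pose proof H as (Hn & HR & Hg0 & Hg1 & Hd & Hpos & HU0 & HdU0 & Hode).
  destruct (near_R _ _ _ _ H) as [d [Hd0 [Hd1 Hnear]]].
  pose proof (beta_gt1 g ltac:(lra)) as Hb.
  pose proof (INR_ge1 n Hn) as Hn1.
  set (A := Abnd n Rad).
  assert (HA : 0 < A).
  { unfold A, Abnd. assert (0 <= (INR n - 1)/Rad) by (apply Rdiv_le_0_compat; lra). lra. }
  exists d. split; [lra|]. split; [lra|].
  intros r Hr. split; [apply Hnear; lra|].
  set (b := beta_of g) in *.
  set (C := b / 2 * U r + A * Derive U r).
  assert (HUr := Hpos r ltac:(lra)). assert (HdUr := dpos _ _ _ _ H r ltac:(lra)).
  assert (HC : 0 < C) by (unfold C; nra).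
  assert (dmono : forall s, Rad < s <= r -> Derive U s <= Derive U r).
  { intros s Hs. apply (mono_le (Derive U) (Derive (Derive U)) s r ltac:(lra)).
    - intros x Hx. apply (dU_deriv _ _ _ _ H). lra.
    - intros x Hx. specialize (Hnear x ltac:(lra)). lra. }
  assert (aprop : forall s, Rad < s <= r -> 0 <= (INR n - 1)/s + s/2 <= A).
  { intros s Hs.
    assert (0 <= (INR n - 1)/s) by (apply Rdiv_le_0_compat; lra).
    assert ((INR n - 1)/s <= (INR n - 1)/Rad).
    { unfold Rdiv. apply Rmult_le_compat_l; [lra|]. apply Rinv_le_contravar; lra. }
    unfold A, Abnd; lra. }
  assert (lim0 : forall F : R -> R,
            (forall s, Rad < s <= r -> F s <= F r) ->
            (forall s, Rad < s -> Rabs (F s) <= C * U s + Derive U s ^ 2 / 2 + Rpower (U s) g) ->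
            0 <= F r).
  { intros F HF HFb.
    destruct (Rle_or_lt 0 (F r)) as [Hle|Hlt]; [exact Hle|exfalso].
    set (q := - F r).
    set (p := Rmin 1 (q / (2 * (C + 2)))).
    assert (Hp0 : 0 < p) by (unfold p; apply Rmin_pos; [lra| apply Rdiv_lt_0_compat; unfold q; lra]).
    assert (Hp1 : p <= 1) by (unfold p; apply Rmin_l).
    assert (Hp2 : p <= q / (2 * (C + 2))) by (unfold p; apply Rmin_r).
    destruct (rp_small g Hg0 p Hp0) as [e [He Hrs]].
    destruct (small_near _ _ _ _ H (Rmin p e) ltac:(apply Rmin_pos; lra)) as [eta [Heta Hs]].
    set (s := Rad + Rmin eta (r - Rad) / 2).
    assert (Hm1 := Rmin_l eta (r - Rad)). assert (Hm2 := Rmin_r eta (r - Rad)).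
    assert (Hm0 : 0 < Rmin eta (r - Rad)) by (apply Rmin_pos; lra).
    assert (Hq1 := Rmin_l p e). assert (Hq2 := Rmin_r p e).
    specialize (Hs s ltac:(unfold s; lra)).
    specialize (HF s ltac:(unfold s; lra)). specialize (HFb s ltac:(unfold s; lra)).
    specialize (Hrs (U s) ltac:(lra)).
    assert (Habs : Derive U s ^ 2 <= p) .
    { assert (Rabs (Derive U s) ^ 2 <= p) by (pose proof (Rabs_pos (Derive U s)); nra).
      assert (E2 : Derive U s ^ 2 = Rabs (Derive U s) ^ 2).
      { rewrite RPow_abs. rewrite Rabs_right; [reflexivity| apply Rle_ge, pow2_ge_0]. }
      rewrite E2; exact H0. }
    assert (HCU : C * U s <= C * p) by nra.
    assert (Hqq : (C + 2) * p <= q / 2).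
    { replace (q/2) with ((C+2) * (q / (2 * (C+2)))) by (field; lra). nra. }
    pose proof (Rle_abs (- F s)) as Ha. rewrite Rabs_Ropp in Ha.
    unfold q in *. nra. }
  assert (Ebnd : forall s, Rad < s -> Rabs (Efun g U s) <= Derive U s ^ 2 / 2 + Rpower (U s) g).
  { intros s Hs. unfold Efun. pose proof (rp_pos (U s) g).
    assert (0 <= Derive U s ^ 2 / 2) by (pose proof (pow2_ge_0 (Derive U s)); lra).
    apply Rabs_le. lra. }
  assert (HUs : forall s, Rad < s -> 0 < U s) by (intros; apply Hpos; lra).
  assert (Up : 0 <= C * U r + (-1) * Efun g U r).
  { apply (lim0 (fun z => C * U z + (-1) * Efun g U z)).
    - intros s Hs.
      apply (mono_le (fun z => C * U z + (-1) * Efun g U z)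
         (fun z => C * Derive U z + (-1) * (Derive U z * (b / 2 * U z - ((INR n - 1)/z + z/2) * Derive U z)))
         s r ltac:(lra)).
      + intros x Hx. apply isd_lin with (df := Derive U x)
          (dh := Derive U x * (b / 2 * U x - ((INR n - 1)/x + x/2) * Derive U x)).
        * apply (U_deriv _ _ _ _ H). lra.
        * apply (E_deriv _ _ _ _ H). lra.
        * reflexivity.
      + intros x Hx. pose proof (aprop x ltac:(lra)). pose proof (dpos _ _ _ _ H x ltac:(lra)).
        pose proof (U_mono _ _ _ _ H x r ltac:(lra)). pose proof (HUs x ltac:(lra)).
        assert (b / 2 * U x <= b/2 * U r) by nra.
        assert (0 <= ((INR n - 1)/x + x/2) * Derive U x) by nra.
        assert (0 <= C - b / 2 * U x + ((INR n - 1)/x + x/2) * Derive U x) by (unfold C; nra).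
        nra.
    - intros s Hs. pose proof (Ebnd s Hs). pose proof (HUs s Hs).
      eapply Rle_trans; [apply Rabs_triang|]. rewrite (Rabs_mult (-1)). replace (Rabs (-1)) with 1 by (rewrite Rabs_left; lra).
      rewrite Rabs_mult, (Rabs_right C), (Rabs_right (U s)) by lra. lra. }
  assert (Lo : 0 <= C * U r + 1 * Efun g U r).
  { apply (lim0 (fun z => C * U z + 1 * Efun g U z)).
    - intros s Hs.
      apply (mono_le (fun z => C * U z + 1 * Efun g U z)
         (fun z => C * Derive U z + 1 * (Derive U z * (b / 2 * U z - ((INR n - 1)/z + z/2) * Derive U z)))
         s r ltac:(lra)).
      + intros x Hx. apply isd_lin with (df := Derive U x)
          (dh := Derive U x * (b / 2 * U x - ((INR n - 1)/x + x/2) * Derive U x)).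
        * apply (U_deriv _ _ _ _ H). lra.
        * apply (E_deriv _ _ _ _ H). lra.
        * reflexivity.
      + intros x Hx. pose proof (aprop x ltac:(lra)). pose proof (dpos _ _ _ _ H x ltac:(lra)).
        pose proof (dmono x ltac:(lra)). pose proof (HUs x ltac:(lra)).
        assert (((INR n - 1)/x + x/2) * Derive U x <= A * Derive U r) by nra.
        assert (0 <= C + b / 2 * U x - ((INR n - 1)/x + x/2) * Derive U x) by (unfold C; nra).
        nra.
    - intros s Hs. pose proof (Ebnd s Hs). pose proof (HUs s Hs).
      eapply Rle_trans; [apply Rabs_triang|]. rewrite (Rabs_mult 1), Rabs_R1.
      rewrite Rabs_mult, (Rabs_right C), (Rabs_right (U s)) by lra. lra. }
  apply Rabs_le. lra.
Qed.


Lemma sqrt_close X : 0 <= X -> Rabs (sqrt X - sqrt 2) <= Rabs (X - 2).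
Proof.
  intros HX. pose proof (sqrt_pos X). pose proof (sqrt_sqrt X HX).
  pose proof (sqrt_sqrt 2 ltac:(lra)).
  assert (1 <= sqrt 2) by (rewrite <- sqrt_1; apply sqrt_le_1_alt; lra).
  assert (E : X - 2 = (sqrt X - sqrt 2) * (sqrt X + sqrt 2)) by nra.
  rewrite E, Rabs_mult. rewrite (Rabs_right (sqrt X + sqrt 2)) by lra.
  pose proof (Rabs_pos (sqrt X - sqrt 2)). nra.
Qed.

Lemma phi_deriv n Rad g U : ode_hyp n Rad g U -> forall r, Rad < r ->
  is_derive (fun z => Rpower (U z) (1 / beta_of g)) r
    (1 / beta_of g * sqrt (Derive U r ^ 2 / Rpower (U r) g)).
Proof.
  intros H r Hr. pose proof H as (Hn & HR & Hg0 & Hg1 & Hd & Hpos & HU0 & HdU0 & Hode).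
  specialize (Hpos r Hr). destruct (Hd r Hr) as [Hd1 Hd2].
  pose proof (dpos _ _ _ _ H r Hr) as Hdp.
  rewrite (beta_inv g ltac:(lra)). unfold Rpower. auto_derive.
  - repeat split; auto.
  - change (fun x => U x) with U.
    set (u := U r). set (e1 := exp (g / 2 * ln u)). assert (Hu : 0 < u) by (unfold u; lra).
    assert (He1 : 0 < e1) by apply exp_pos.
    assert (E1 : exp (g * ln u) = e1 * e1).
    { unfold e1. rewrite <- exp_plus. replace (g / 2 * ln u + g / 2 * ln u) with (g * ln u) by field. reflexivity. }
    assert (E2 : exp ((1 - g/2) * ln u) = u / e1).
    { unfold e1. replace ((1 - g/2) * ln u) with (ln u + - (g/2 * ln u)) by ring.
      rewrite exp_plus, exp_Ropp. rewrite exp_ln by lra. field. apply Rgt_not_eq; apply exp_pos. }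
    rewrite E1, E2.
    replace (Derive U r ^ 2 / (e1 * e1)) with ((Derive U r / e1) ^ 2) by (field; lra).
    rewrite sqrt_pow2 by (apply Rlt_le, Rdiv_lt_0_compat; lra).
    field. split; lra.
Qed.

Lemma dphi_close n Rad g U : ode_hyp n Rad g U ->
  exists d, 0 < d /\ forall r, Rad < r < Rad + d ->
    Rabs (1 / beta_of g * sqrt (Derive U r ^ 2 / Rpower (U r) g) - sqrt 2 / beta_of g)
      <= 2 * (beta_of g / 2 * U r + Abnd n Rad * Derive U r).
Proof.
  intros H. pose proof H as (Hn & HR & Hg0 & Hg1 & Hd & Hpos & HU0 & HdU0 & Hode).
  destruct (E_bound _ _ _ _ H) as [d [Hd0 [Hd1 HE]]].
  exists d. split; [lra|]. intros r Hr.
  destruct (HE r Hr) as [HU1 HEr].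
  pose proof (Hpos r ltac:(lra)) as Hu.
  pose proof (beta_gt1 g ltac:(lra)) as Hb.
  set (b := beta_of g) in *.
  set (C := b / 2 * U r + Abnd n Rad * Derive U r) in *.
  set (P := Rpower (U r) g).
  assert (HP : 0 < P) by apply rp_pos.
  assert (HUP : U r <= P) by (apply rp_ge_self; lra).
  set (X := Derive U r ^ 2 / P).
  assert (HX : 0 <= X) by (unfold X; apply Rdiv_le_0_compat; [apply pow2_ge_0|lra]).
  assert (HX2 : Rabs (X - 2) <= 2 * C).
  { unfold Efun in HEr. fold P in HEr.
    replace (X - 2) with (2 * (Derive U r ^ 2 / 2 - P) / P) by (unfold X; field; lra).
    rewrite Rabs_div by lra. rewrite Rabs_mult, (Rabs_right 2) by lra.
    rewrite (Rabs_right P) by lra.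
    assert (HA : 0 < Abnd n Rad).
    { unfold Abnd. pose proof (INR_ge1 n Hn).
      assert (0 <= (INR n - 1)/Rad) by (apply Rdiv_le_0_compat; lra). lra. }
    pose proof (dpos _ _ _ _ H r ltac:(lra)).
    assert (HC : 0 <= C) by (unfold C; nra).
    assert (Hk : Rabs (Derive U r ^ 2 / 2 - P) <= C * P) by nra.
    unfold Rdiv. apply Rle_trans with (2 * (C * P) * / P).
    + apply Rmult_le_compat_r; [apply Rlt_le, Rinv_0_lt_compat; lra| lra].
    + right. field. lra. }
  replace (1 / b * sqrt X - sqrt 2 / b) with (/ b * (sqrt X - sqrt 2)) by (field; lra).
  rewrite Rabs_mult, Rabs_right by (apply Rle_ge, Rlt_le, Rinv_0_lt_compat; lra).
  pose proof (sqrt_close X HX).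
  assert (/ b < 1) by (rewrite <- Rinv_1; apply Rinv_lt_contravar; lra).
  assert (0 < / b) by (apply Rinv_0_lt_compat; lra).
  pose proof (Rabs_pos (sqrt X - sqrt 2)). nra.
Qed.


Lemma phi_limit n Rad g U : ode_hyp n Rad g U ->
  filterlim (fun r => Rpower (U r) (1 / beta_of g) / (r - Rad))
    (at_right Rad) (locally (sqrt 2 / beta_of g)).
Proof.
  intros H. pose proof H as (Hn & HR & Hg0 & Hg1 & Hd & Hpos & HU0 & HdU0 & Hode).
  pose proof (beta_gt1 g ltac:(lra)) as Hb.
  set (b := beta_of g) in *.
  set (L := sqrt 2 / b).
  assert (HL : 0 < L) by (unfold L; apply Rdiv_lt_0_compat; [apply sqrt_lt_R0|]; lra).
  set (A := Abnd n Rad).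
  assert (HA : 0 < A).
  { unfold A, Abnd. pose proof (INR_ge1 n Hn).
    assert (0 <= (INR n - 1)/Rad) by (apply Rdiv_le_0_compat; lra). lra. }
  set (phi := fun z => Rpower (U z) (1 / b)).
  set (dphi := fun z => 1 / b * sqrt (Derive U z ^ 2 / Rpower (U z) g)).
  apply lim_right_intro. intros eps Heps.
  destruct (dphi_close _ _ _ _ H) as [d0 [Hd0 Hcl]].
  destruct (small_near _ _ _ _ H (eps / (4 * (b + 2 * A + 1)))
     ltac:(apply Rdiv_lt_0_compat; lra)) as [e1 [He1 Hs1]].
  assert (Hclose : forall z, Rad < z < Rad + Rmin d0 e1 -> Rabs (dphi z - L) < eps / 4).
  { intros z Hz. assert (Hm1 := Rmin_l d0 e1). assert (Hm2 := Rmin_r d0 e1).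
    specialize (Hcl z ltac:(lra)). specialize (Hs1 z ltac:(lra)).
    fold b A in Hcl. unfold dphi, L.
    eapply Rle_lt_trans; [exact Hcl|].
    destruct Hs1 as [[Hu1 Hu2] Hu3].
    pose proof (Rle_abs (Derive U z)).
    set (p := eps / (4 * (b + 2 * A + 1))) in *.
    assert (Hp : p * (4 * (b + 2 * A + 1)) = eps) by (unfold p; field; lra).
    nra. }
  exists (Rmin d0 e1). split; [apply Rmin_pos; lra|].
  intros r Hr.
  assert (Hderiv : forall z, Rad < z -> is_derive phi z (dphi z)).
  { intros z Hz. apply (phi_deriv _ _ _ _ H z Hz). }
  assert (Hup : forall s, Rad < s < r -> phi r - phi s <= (L + eps/4) * (r - s)).
  { intros s Hs.
    assert (M := mono_le (fun z => (L + eps/4) * z + (-1) * phi z)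
       (fun z => (L + eps/4) * 1 + (-1) * dphi z) s r ltac:(lra)).
    simpl in M.
    assert (M' : (L + eps/4) * s + (-1) * phi s <= (L + eps/4) * r + (-1) * phi r).
    { apply M.
      - intros z Hz. apply (isd_lin (fun z => z) phi z 1 (dphi z)).
        + auto_derive; auto.
        + apply Hderiv; lra.
        + reflexivity.
      - intros z Hz. specialize (Hclose z ltac:(lra)).
        pose proof (Rle_abs (dphi z - L)). lra. }
    lra. }
  assert (Hlo : forall s, Rad < s < r -> (L - eps/4) * (r - s) <= phi r - phi s).
  { intros s Hs.
    assert (M := mono_le (fun z => 1 * phi z + (-(L - eps/4)) * z)
       (fun z => 1 * dphi z + (-(L - eps/4)) * 1) s r ltac:(lra)).
    simpl in M.
    assert (M' : 1 * phi s + (-(L - eps/4)) * s <= 1 * phi r + (-(L - eps/4)) * r).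
    { apply M.
      - intros z Hz. apply (isd_lin phi (fun z => z) z (dphi z) 1).
        + apply Hderiv; lra.
        + auto_derive; auto.
        + reflexivity.
      - intros z Hz. specialize (Hclose z ltac:(lra)).
        pose proof (Rle_abs (- (dphi z - L))). rewrite Rabs_Ropp in H0. lra. }
    lra. }
  set (h := r - Rad).
  assert (Hh : 0 < h) by (unfold h; lra). assert (Hhdef : h = r - Rad) by reflexivity.
  destruct (rp_small (1/b) ltac:(apply Rdiv_lt_0_compat; lra) (eps/4 * h) ltac:(nra))
    as [e2 [He2 Hrs]].
  destruct (small_near _ _ _ _ H e2 He2) as [e3 [He3 Hs3]].
  set (t := Rmin (Rmin e3 h) (h * eps / (4 * (L + 1)))).
  assert (Ht1 : t <= Rmin e3 h) by apply Rmin_l.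
  assert (Ht2 : t <= h * eps / (4 * (L + 1))) by apply Rmin_r.
  assert (Ht3 := Rmin_l e3 h). assert (Ht4 := Rmin_r e3 h).
  assert (Ht0 : 0 < t).
  { unfold t. apply Rmin_pos; [apply Rmin_pos; lra|]. apply Rdiv_lt_0_compat; nra. }
  set (s := Rad + t / 2).
  specialize (Hs3 s ltac:(unfold s; lra)).
  specialize (Hrs (U s) ltac:(lra)). change (Rpower (U s) (1/b)) with (phi s) in Hrs.
  assert (Hphs : 0 < phi s) by apply rp_pos.
  specialize (Hup s ltac:(unfold s; lra)). specialize (Hlo s ltac:(unfold s; lra)).
  assert (HLs : L * (s - Rad) <= eps / 4 * h).
  { unfold s. replace (Rad + t/2 - Rad) with (t/2) by ring.
    assert (t / 2 <= h * eps / (4 * (L + 1))) by lra.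
    assert (L * (h * eps / (4 * (L + 1))) <= eps / 4 * h).
    { apply (Rmult_le_reg_r (L + 1)); [lra|].
      replace (L * (h * eps / (4 * (L + 1))) * (L + 1)) with (L * (h * eps / 4)) by (field; lra).
      nra. }
    nra. }
  assert (Hrs' : r - s <= h) by (unfold s, h; lra).
  assert (Hpos_rs : 0 <= r - s) by (unfold s, h in *; lra).
  assert (Hbig : Rabs (phi r - L * h) < 3 * (eps / 4) * h).
  { apply Rabs_def1.
    - assert (eps / 4 * (r - s) <= eps/4 * h) by nra.
      assert (phi r - L * h = (phi r - phi s - L * (r - s)) + phi s - L * (s - Rad)) by (unfold h; ring).
      nra.
    - assert (eps / 4 * (r - s) <= eps/4 * h) by nra.
      assert (phi r - L * h = (phi r - phi s - L * (r - s)) + phi s - L * (s - Rad)) by (unfold h; ring).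
      nra. }
  fold phi. fold h.
  change (Rpower (U r) (1 / b)) with (phi r).   replace (phi r / h - L) with ((phi r - L * h) / h) by (field; lra).
  rewrite Rabs_div by lra. rewrite (Rabs_right h) by lra.
  apply (Rmult_lt_reg_r h); [lra|]. unfold Rdiv. rewrite Rmult_assoc, Rinv_l, Rmult_1_r by lra.
  nra.
Qed.


Lemma Z2_deriv n Rad g U K : ode_hyp n Rad g U -> forall r, Rad < r ->
  is_derive (fun x => (x * Derive U x - beta_of g * U x - 2 * K) * exp (x ^ 2 / 4)) r
   (exp (r ^ 2 / 4) * (g * r * Rpower (U r) (g - 1) - (INR n + beta_of g - 2) * Derive U r - r * K)).
Proof.
  intros H r Hr. pose proof H as (Hn & HR & Hg0 & Hg1 & Hd & Hpos & HU0 & HdU0 & Hode).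
  destruct (Hd r Hr) as [Hd1 Hd2].
  auto_derive.
  - repeat split; auto.
  - change (fun x => Derive U x) with (Derive U). change (fun x => U x) with U.
    rewrite (Hode r Hr). replace (exp (r * (r * 1) * / 4)) with (exp (r ^ 2 / 4)) by (f_equal; field). field. lra.
Qed.

Lemma Z1_deriv n Rad g U c0 : ode_hyp n Rad g U -> forall r, Rad < r ->
  is_derive (fun x => (x * Derive U x - beta_of g * U x + c0 * U x / x ^ 2) * exp (x ^ 2 / 4)) r
   (exp (r ^ 2 / 4) * (g * r * Rpower (U r) (g - 1) - (INR n + beta_of g - 2) * Derive U r
     + c0 * Derive U r / r ^ 2 - 2 * c0 * U r / r ^ 3 + c0 / 2 * U r / r)).
Proof.
  intros H r Hr. pose proof H as (Hn & HR & Hg0 & Hg1 & Hd & Hpos & HU0 & HdU0 & Hode).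
  destruct (Hd r Hr) as [Hd1 Hd2].
  auto_derive.
  - repeat split; auto. nra.
  - change (fun x => Derive U x) with (Derive U). change (fun x => U x) with U.
    rewrite (Hode r Hr). replace (exp (r * (r * 1) * / 4)) with (exp (r ^ 2 / 4)) by (f_equal; field). field. lra.
Qed.

Lemma H1_deriv n Rad g U B : ode_hyp n Rad g U -> forall r, Rad < r ->
  is_derive (fun x => (U x + B) * exp (- beta_of g * ln x)) r
   (exp (- beta_of g * ln r) / r * (r * Derive U r - beta_of g * U r - beta_of g * B)).
Proof.
  intros H r Hr. pose proof H as (Hn & HR & Hg0 & Hg1 & Hd & Hpos & HU0 & HdU0 & Hode).
  destruct (Hd r Hr) as [Hd1 Hd2].
  auto_derive.
  - repeat split; auto. lra.
  - change (fun x => U x) with U. field. lra.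
Qed.

Lemma H2_deriv n Rad g U C : ode_hyp n Rad g U -> forall r, Rad < r ->
  is_derive (fun x => U x * exp (- beta_of g * ln x) * exp (C / (2 * x ^ 2))) r
   (exp (- beta_of g * ln r) * exp (C / (2 * r ^ 2)) *
     (Derive U r - beta_of g * U r / r - C * U r / r ^ 3)).
Proof.
  intros H r Hr. pose proof H as (Hn & HR & Hg0 & Hg1 & Hd & Hpos & HU0 & HdU0 & Hode).
  destruct (Hd r Hr) as [Hd1 Hd2].
  auto_derive.
  - repeat split; auto; try lra. nra.
  - change (fun x => U x) with U.
    replace (exp (C * / (2 * (r * (r * 1))))) with (exp (C / (2 * r ^ 2))) by (f_equal; field; lra).
    field. lra.
Qed.


Lemma infinity n Rad g U : ode_hyp n Rad g U ->
  exists c, 0 < c /\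
    filterlim (fun r => U r / Rpower r (beta_of g)) (Rbar_locally p_infty) (locally c).
Proof.
  intros H. pose proof H as (Hn & HR & Hg0 & Hg1 & Hd & Hpos & HU0 & HdU0 & Hode).
  pose proof (beta_gt1 g ltac:(lra)) as Hb.
  pose proof (INR_ge1 n Hn) as Hn1.
  set (b := beta_of g) in *.
  set (k := INR n + b - 2).
  assert (Hk : 0 < k) by (unfold k; lra).
  set (r1 := Rad + 3 + 2 * b + 2 * k).
  assert (Hr1 : Rad < r1) by (unfold r1; lra).
  assert (Hr1b : 3 + 2 * b + 2 * k <= r1) by (unfold r1; lra).
  assert (Hsq : forall x, r1 <= x -> 9 <= x ^ 2 /\ 4 * b <= x ^ 2 /\ 4 * k <= x ^ 2 /\ 3 <= x).
  { intros x Hx. assert (3 + 2 * b + 2 * k <= x) by lra. repeat split; nra. }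
  set (m := U r1).
  assert (Hm : 0 < m) by (apply Hpos; lra).
  assert (Umon : forall x, r1 <= x -> m <= U x).
  { intros x Hx. apply (U_mono _ _ _ _ H). lra. }
  assert (Hdp : forall x, r1 <= x -> 0 < Derive U x).
  { intros x Hx. apply (dpos _ _ _ _ H). lra. }
  set (K := g * Rpower m (g - 1)).
  assert (HK0 : 0 < K) by (unfold K; pose proof (rp_pos m (g-1)); nra).
  assert (HK : forall x, r1 <= x -> g * Rpower (U x) (g - 1) <= K).
  { intros x Hx. unfold K, Rpower. apply Rmult_le_compat_l; [lra|]. apply exp_le.
    assert (ln m <= ln (U x)) by (apply ln_le; [lra| apply Umon; lra]). nra. }
  set (Z2 := fun x => (x * Derive U x - b * U x - 2 * K) * exp (x ^ 2 / 4)).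
  assert (Z2mon : forall x, r1 <= x -> Z2 x <= Z2 r1).
  { intros x Hx.
    assert (M := mono_le (fun z => (-1) * Z2 z + 0 * z)
      (fun z => (-1) * (exp (z ^ 2 / 4) * (g * z * Rpower (U z) (g - 1) - k * Derive U z - z * K)) + 0 * 1)
      r1 x Hx).
    assert (M' : (-1) * Z2 r1 + 0 * r1 <= (-1) * Z2 x + 0 * x); [|lra].
    apply M.
    - intros z Hz. apply (isd_lin Z2 (fun z => z) z (exp (z ^ 2 / 4) * (g * z * Rpower (U z) (g - 1) - k * Derive U z - z * K)) 1).
      + apply (Z2_deriv _ _ _ _ K H). lra.
      + auto_derive; auto.
      + reflexivity.
    - intros z Hz. pose proof (HK z ltac:(lra)). pose proof (Hdp z ltac:(lra)).
      pose proof (exp_pos (z ^ 2 / 4)).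
      assert (g * z * Rpower (U z) (g - 1) <= z * K) by nra.
      assert (0 <= k * Derive U z) by nra.
      nra. }
  set (B1 := 2 * K + Rmax (Z2 r1) 0).
  assert (HB1 : 0 < B1) by (unfold B1; pose proof (Rmax_r (Z2 r1) 0); lra).
  assert (Wup : forall x, r1 <= x -> x * Derive U x - b * U x <= B1).
  { intros x Hx. pose proof (Z2mon x Hx). pose proof (Rmax_l (Z2 r1) 0). pose proof (Rmax_r (Z2 r1) 0).
    assert (He : 1 <= exp (x ^ 2 / 4)).
    { pose proof (exp_ineq1_le (x ^ 2 / 4)). pose proof (pow2_ge_0 x). lra. }
    unfold Z2 in *. unfold B1.
    destruct (Rle_or_lt (x * Derive U x - b * U x - 2 * K) 0); nra. }
  set (H1 := fun x => (U x + B1 / b) * exp (- b * ln x)).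
  assert (H1mon : forall x y, r1 <= x <= y -> H1 y <= H1 x).
  { intros x y Hxy.
    assert (M := mono_le (fun z => (-1) * H1 z + 0 * z)
      (fun z => (-1) * (exp (- b * ln z) / z * (z * Derive U z - b * U z - b * (B1 / b))) + 0 * 1)
      x y ltac:(lra)).
    assert (M' : (-1) * H1 x + 0 * x <= (-1) * H1 y + 0 * y); [|lra].
    apply M.
    - intros z Hz. apply (isd_lin H1 (fun z => z) z (exp (- b * ln z) / z * (z * Derive U z - b * U z - b * (B1 / b))) 1).
      + apply (H1_deriv _ _ _ _ (B1 / b) H). lra.
      + auto_derive; auto.
      + reflexivity.
    - intros z Hz. pose proof (Wup z ltac:(lra)).
      replace (b * (B1 / b)) with B1 by (field; lra).
      assert (0 < exp (- b * ln z) / z) by (apply Rdiv_lt_0_compat; [apply exp_pos|lra]).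
      nra. }
  set (c0 := 4 * k * b).
  set (Z1 := fun x => (x * Derive U x - b * U x + c0 * U x / x ^ 2) * exp (x ^ 2 / 4)).
  assert (Z1lo : forall x, r1 <= x -> Rmin (Z1 r1) 0 <= Z1 x).
  { intros x Hx. destruct (Rle_or_lt (Rmin (Z1 r1) 0) (Z1 x)) as [h|h]; [exact h|exfalso].
    assert (Hmin1 := Rmin_l (Z1 r1) 0). assert (Hmin2 := Rmin_r (Z1 r1) 0).
    assert (B := barrier Z1
      (fun z => exp (z ^ 2 / 4) * (g * z * Rpower (U z) (g - 1) - k * Derive U z
         + c0 * Derive U z / z ^ 2 - 2 * c0 * U z / z ^ 3 + c0 / 2 * U z / z))
      r1 x (Z1 x) Hx).
    assert (Z1 x < Z1 x); [|lra].
    apply B; [| |lra].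
    - intros z Hz. apply (Z1_deriv _ _ _ _ c0 H). lra.
    - intros z Hz HZ.
      apply Rmult_lt_0_compat; [apply exp_pos|].
      destruct (Hsq z ltac:(lra)) as [S1 [S2 [S3 S4]]].
      set (u := U z). set (v := Derive U z).
      assert (Hu : 0 < u) by (unfold u; apply Hpos; lra).
      assert (Hv : 0 < v) by (unfold v; apply Hdp; lra).
      assert (HR0 : 0 <= g * z * Rpower u (g - 1)) by (apply Rmult_le_pos; [nra|apply Rlt_le, rp_pos]).
      set (q := c0 / z ^ 2).
      assert (Hz2 : 0 < z ^ 2) by lra.
      assert (Hq0 : 0 < q) by (unfold q, c0; apply Rdiv_lt_0_compat; nra).
      assert (Hqk : q <= k).
      { unfold q, c0. apply (Rmult_le_reg_r (z ^ 2)); [lra|].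
        unfold Rdiv. rewrite Rmult_assoc, Rinv_l, Rmult_1_r by lra. nra. }
      assert (Hqb : q <= b).
      { unfold q, c0. apply (Rmult_le_reg_r (z ^ 2)); [lra|].
        unfold Rdiv. rewrite Rmult_assoc, Rinv_l, Rmult_1_r by lra. nra. }
      assert (Hq8 : 2 * q < k * b).
      { unfold q, c0. apply (Rmult_lt_reg_r (z ^ 2)); [lra|].
        replace (2 * (4 * k * b / z ^ 2) * z ^ 2) with (8 * k * b) by (field; lra).
        assert (0 < k * b) by nra. nra. }
      assert (HY : z * v - b * u + q * u < 0).
      { assert (Hneg : Z1 z < 0) by lra. unfold Z1 in Hneg. fold u v in Hneg.
        replace (c0 * u / z ^ 2) with (q * u) in Hneg by (unfold q; field; lra).
        pose proof (exp_pos (z ^ 2 / 4)).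
        destruct (Rlt_or_le (z * v - b * u + q * u) 0) as [hh|hh]; [exact hh|nra]. }
      assert (E : g * z * Rpower u (g - 1) - k * v + c0 * v / z ^ 2 - 2 * c0 * u / z ^ 3 + c0 / 2 * u / z
                = (g * z * z * Rpower u (g - 1) + (q - k) * (z * v) - 2 * q * u + (c0 / 2) * u) / z).
      { unfold q. field. lra. }
      rewrite E. apply Rdiv_lt_0_compat; [|lra].
      assert (Hzv : z * v < (b - q) * u) by lra.
      assert (T1 : (q - k) * (z * v) >= (q - k) * ((b - q) * u)) by nra.
      assert (T2 : (q - k) * (b - q) >= - (k * b)) by nra.
      assert (T3 : 0 <= g * z * z * Rpower u (g - 1)) by (pose proof (rp_pos u (g-1)); nra).
      assert (Hc0 : c0 / 2 = 2 * (k * b)) by (unfold c0; field).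
      rewrite Hc0. nra. }
  set (D := - Rmin (Z1 r1) 0). assert (HDdef : D = - Rmin (Z1 r1) 0) by reflexivity.
  assert (HD : 0 <= D) by (unfold D; pose proof (Rmin_r (Z1 r1) 0); lra).
  set (C2 := c0 + 4 * D / m).
  assert (HC2 : 0 <= C2) by (unfold C2, c0; assert (0 <= 4 * D / m) by (apply Rdiv_le_0_compat; lra); nra).
  assert (Wlo : forall x, r1 <= x -> - (C2 * U x / x ^ 2) <= x * Derive U x - b * U x).
  { intros x Hx. pose proof (Z1lo x Hx) as Z0. assert (Z : - D <= Z1 x) by (rewrite HDdef; lra). unfold Z1 in Z.
    destruct (Hsq x Hx) as [S1 [S2 [S3 S4]]].
    pose proof (Umon x Hx) as Hux.
    set (e := exp (x ^ 2 / 4)) in *.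
    assert (He : x ^ 2 / 4 < e).
    { pose proof (exp_ineq1_le (x ^ 2 / 4)). unfold e. lra. }
    set (Y := x * Derive U x - b * U x + c0 * U x / x ^ 2) in *.
    assert (HYl : - (4 * D / x ^ 2) <= Y).
    { destruct (Rle_or_lt 0 Y) as [hh|hh].
      - assert (0 <= 4 * D / x ^ 2) by (apply Rdiv_le_0_compat; lra). lra.
      - assert (Y * (x ^ 2 / 4) >= Y * e) by nra.
        apply (Rmult_le_reg_r (x ^ 2 / 4)); [lra|].
        replace (- (4 * D / x ^ 2) * (x ^ 2 / 4)) with (- D) by (field; lra). nra. }
    assert (H4 : 4 * D / x ^ 2 <= 4 * D / m * U x / x ^ 2).
    { assert (H4a : 4 * D <= 4 * D / m * U x).
      { replace (4 * D / m * U x) with (4 * D * (U x / m)) by (field; lra).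
        assert (1 <= U x / m).
        { apply (Rmult_le_reg_r m); [lra|]. unfold Rdiv. rewrite Rmult_assoc, Rinv_l; lra. }
        nra. }
      unfold Rdiv in *. apply Rmult_le_compat_r; [apply Rlt_le, Rinv_0_lt_compat; lra| exact H4a]. }
    unfold Y in HYl. unfold C2.
    replace ((c0 + 4 * D / m) * U x / x ^ 2) with (c0 * U x / x ^ 2 + 4 * D / m * U x / x ^ 2)
      by (field; lra).
    lra. }
  set (H2 := fun x => U x * exp (- b * ln x) * exp (- C2 / (2 * x ^ 2))).
  assert (H2mon : forall x, r1 <= x -> H2 r1 <= H2 x).
  { intros x Hx.
    apply (mono_le H2 (fun z => exp (- b * ln z) * exp (- C2 / (2 * z ^ 2)) *
       (Derive U z - b * U z / z - - C2 * U z / z ^ 3)) r1 x Hx).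
    - intros z Hz. apply (H2_deriv _ _ _ _ (- C2) H). lra.
    - intros z Hz. pose proof (Wlo z ltac:(lra)).
      destruct (Hsq z ltac:(lra)) as [S1 [S2 [S3 S4]]].
      apply Rmult_le_pos; [apply Rmult_le_pos; apply Rlt_le, exp_pos|].
      assert (EE : Derive U z - b * U z / z - - C2 * U z / z ^ 3 =
        (z * Derive U z - b * U z + C2 * U z / z ^ 2) / z).
      { field. lra. }
      rewrite EE.
      apply Rdiv_le_0_compat; lra. }
  set (m2 := H2 r1).
  assert (Hm2 : 0 < m2).
  { unfold m2, H2.
    apply Rmult_lt_0_compat; [apply Rmult_lt_0_compat; [apply Hpos; lra|apply exp_pos]|apply exp_pos]. }
  assert (Vlo : forall x, r1 <= x -> m2 <= U x * exp (- b * ln x)).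
  { intros x Hx. pose proof (H2mon x Hx).
    destruct (Hsq x Hx) as [S1 [S2 [S3 S4]]].
    assert (Hle : exp (- C2 / (2 * x ^ 2)) <= 1).
    { rewrite <- exp_0. apply exp_le. unfold Rdiv.
      assert (0 <= / (2 * x ^ 2)) by (apply Rlt_le, Rinv_0_lt_compat; lra). nra. }
    assert (0 < U x * exp (- b * ln x)).
    { apply Rmult_lt_0_compat; [apply Hpos; lra| apply exp_pos]. }
    unfold m2 in *. unfold H2 in *. nra. }
  assert (H1lo : forall x, r1 <= x -> m2 <= H1 x).
  { intros x Hx. pose proof (Vlo x Hx). unfold H1.
    assert (0 <= B1 / b * exp (- b * ln x)).
    { apply Rmult_le_pos; [apply Rdiv_le_0_compat; lra| apply Rlt_le, exp_pos]. }
    lra. }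
  destruct (mono_lim H1 r1 m2 H1mon H1lo) as [c [Hc Hlim]].
  exists c. split; [lra|].
  apply lim_infty_intro. intros eps Heps.
  destruct (Hlim (eps / 2) ltac:(lra)) as [M1 HM1].
  exists (Rmax (Rmax M1 r1) (2 * (B1 / b) / eps + 1)).
  intros x Hx.
  assert (Hx1 := Rmax_l (Rmax M1 r1) (2 * (B1 / b) / eps + 1)).
  assert (Hx2 := Rmax_r (Rmax M1 r1) (2 * (B1 / b) / eps + 1)).
  assert (Hx3 := Rmax_l M1 r1). assert (Hx4 := Rmax_r M1 r1).
  specialize (HM1 x ltac:(lra)).
  destruct (Hsq x ltac:(lra)) as [S1 [S2 [S3 S4]]].
  assert (Ediv : U x / Rpower x b = H1 x - B1 / b * exp (- b * ln x)).
  { unfold H1, Rpower. replace (- b * ln x) with (- (b * ln x)) by ring.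
    rewrite exp_Ropp. field. split; [apply Rgt_not_eq, exp_pos|lra]. }
  rewrite Ediv.
  assert (Hex : exp (- b * ln x) * x <= 1).
  { rewrite <- (exp_ln x) at 2 by lra. rewrite <- exp_plus. rewrite <- exp_0. apply exp_le.
    assert (0 <= ln x) by (rewrite <- ln_1; apply ln_le; lra). nra. }
  assert (Hsmall : B1 / b * exp (- b * ln x) < eps / 2).
  { assert (HB : 0 < B1 / b) by (apply Rdiv_lt_0_compat; lra).
    assert (Hxe : 2 * (B1 / b) / eps < x) by lra.
    assert (Hxe' : 2 * (B1 / b) < eps * x).
    { apply (Rmult_lt_compat_r eps) in Hxe; [|lra].
      replace (2 * (B1 / b) / eps * eps) with (2 * (B1 / b)) in Hxe by (field; lra). lra. }
    pose proof (exp_pos (- b * ln x)). nra. }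
  assert (0 <= B1 / b * exp (- b * ln x)).
  { apply Rmult_le_pos; [apply Rdiv_le_0_compat; lra| apply Rlt_le, exp_pos]. }
  apply Rabs_def1; apply Rabs_def2 in HM1; lra.
Qed.


Theorem lemma6p7 (n : nat) (Rad g : R) (U : R -> R)
  (Hn : (1 <= n)%nat) (HR : 0 < Rad) (Hg0 : 0 < g) (Hg1 : g < 1)
  (* U is C^2 on (Rad, +oo) *)
  (HC2 : forall r, Rad < r ->
     ex_derive U r /\ ex_derive (Derive U) r /\ continuous (Derive (Derive U)) r)
  (* U positive on (Rad, +oo) *)
  (Hpos : forall r, Rad < r -> 0 < U r)
  (* U and U' extend continuously to r = Rad, with U(Rad) = U'(Rad) = 0 *)
  (HU0 : filterlim U (at_right Rad) (locally 0))
  (HdU0 : filterlim (Derive U) (at_right Rad) (locally 0))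
  (* the ODE on (Rad, +oo) *)
  (Hode : forall r, Rad < r ->
     Derive (Derive U) r + ((INR n - 1) / r + r / 2) * Derive U r
       - beta_of g / 2 * U r = g * Rpower (U r) (g - 1)) :
  (forall r, Rad < r -> 0 < U r) /\
  (forall r, Rad < r -> 0 < Derive U r) /\
  filterlim (fun r => Rpower (U r) (1 / beta_of g) / (r - Rad))
    (at_right Rad) (locally (sqrt 2 / beta_of g)) /\
  (exists c, 0 < c /\
     filterlim (fun r => U r / Rpower r (beta_of g)) (Rbar_locally p_infty) (locally c)).
Proof.
  assert (H : ode_hyp n Rad g U).
  { unfold ode_hyp. repeat split; auto.
    - apply (HC2 r H).
    - apply (HC2 r H).
    - intros r Hr. specialize (Hode r Hr). lra. }
  split; [exact Hpos|].
  split; [exact (dpos _ _ _ _ H)|].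
  split; [exact (phi_limit _ _ _ _ H)|].
  exact (infinity _ _ _ _ H).
Qed.
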